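(* Let $0<\alpha\le 5\pi/6$ and let $u,v\in V$ with $\{u,v\}\in E$ (i.e. $d(u,v)\le R$). Then either $\{u,v\}\in E_\alpha$, or there exist $u',v'\in V$ such that (a) $d(u',v')<d(u,v)$, (b) $u'=u$ or $\{u,u'\}\in E_\alpha$, and (c) $v'=v$ or $\{v,v'\}\in E_\alpha$.
   Context: Let $V$ be a finite set of pairwise distinct points (nodes) in the Euclidean plane, $d$ the Euclidean distance, and $R>0$. Let $G_R=(V,E)$ be the undirected graph with $E=\{\{u,v\}: u\neq v,\ d(u,v)\le R\}$. Fix a finite increasing sequence of radius levels $0<r_1<r_2<\dots<r_k=R$. For $u\in V$ and $1\le i\le k$ let $S_i(u)=\{v\in V\setminus\{u\}: d(u,v)\le r_i\}$. For $0<\alpha<2\pi$, a closed cone of width $\alpha$ with apex $u$ is a set $\{u+t(\cos\varphi,\sin\varphi): t\ge 0,\ \varphi\in[\theta-\alpha/2,\theta+\alpha/2]\}$ for some $\theta$. A finite set $S\subseteq V\setminus\{u\}$ has an $\alpha$-gap (at $u$) if some closed cone of width $\alpha$ with apex $u$ contains no node of $S$ (in particular $\emptyset$ has an $\alpha$-gap). The algorithm CBTC($\alpha$) assigns to each $u$ the index $i_u$ = the least $i\in\{1,\dots,k\}$ such that $S_i(u)$ has no $\alpha$-gap, or $i_u=k$ if there is no such $i$; set $N_\alpha(u)=S_{i_u}(u)$ and $N_\alpha=\{(u,v): v\in N_\alpha(u)\}$. Let $E_\alpha=\{\{u,v\}: (u,v)\in N_\alpha \text{ or } (v,u)\in N_\alpha\}$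 (the symmetric closure of $N_\alpha$) and $G_\alpha=(V,E_\alpha)$. *)

(* Defs.v *)
From Stdlib Require Import Reals List.
Open Scope R_scope.

Definition point : Type := (R * R)%type.

Definition d (p q : point) : R :=
  sqrt ((fst p - fst q) ^ 2 + (snd p - snd q) ^ 2).

(* Radius levels r_1 < ... < r_k = Rmax are given as a list rs of length k;
   r_i (1-based in the paper) is  nth (i-1) rs 0. Here indices are 0-based:
   level i (0 <= i < k) stands for r_{i+1}. *)
Definition levels_ok (rs : list R) (Rmax : R) : Prop :=
  (0 < length rs)%nat /\
  0 < nth 0 rs 0 /\
  (forall i : nat, (S i < length rs)%nat -> nth i rs 0 < nth (S i) rs 0) /\
  nth (pred (length rs)) rs 0 = Rmax.

Definition S_lvl (V : list point) (rs : list R) (i : nat) (u v : point) : Prop :=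
  In v V /\ v <> u /\ d u v <= nth i rs 0.

Definition in_cone (u : point) (theta alpha : R) (w : point) : Prop :=
  exists t phi : R, 0 <= t /\ theta - alpha / 2 <= phi <= theta + alpha / 2 /\
    w = (fst u + t * cos phi, snd u + t * sin phi).

Definition has_gap (Sset : point -> Prop) (u : point) (alpha : R) : Prop :=
  exists theta : R, forall w, Sset w -> ~ in_cone u theta alpha w.

Definition cbtc_index (V : list point) (rs : list R) (alpha : R) (u : point)
  (i : nat) : Prop :=
  (i < length rs)%nat /\
  ((~ has_gap (S_lvl V rs i u) u alpha /\
    forall j : nat, (j < i)%nat -> has_gap (S_lvl V rs j u) u alpha)
   \/
   (i = pred (length rs) /\
    forall j : nat, (j < length rs)%nat -> has_gap (S_lvl V rs j u) u alpha)).

Definition N_alpha (V : list point) (rs : list R) (alpha : R) (u v : point) : Prop :=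
  exists i : nat, cbtc_index V rs alpha u i /\ S_lvl V rs i u v.

Definition E_alpha (V : list point) (rs : list R) (alpha : R) (u v : point) : Prop :=
  N_alpha V rs alpha u v \/ N_alpha V rs alpha v u.

Definition E_R (V : list point) (Rmax : R) (u v : point) : Prop :=
  In u V /\ In v V /\ u <> v /\ d u v <= Rmax.

(* Main.v *)
Require Import Defs.
From Stdlib Require Import Reals List Lra Lia Psatz Classical.
Open Scope R_scope.


Lemma QCs (L M p q t : R) : p <= t < q ->
  - p*p + L*p + M > 0 -> - q*q + L*q + M >= 0 -> - t*t + L*t + M > 0.
Proof.
  intros [H1 H2] Hp Hq.
  assert (E : (q-p)*(-t*t+L*t+M) = (q-t)*(-p*p+L*p+M) + (t-p)*(-q*q+L*q+M) + (q-p)*(t-p)*(q-t)) by ring.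
  assert (0 < q - p) by lra.
  assert (0 < (q-p)*(-t*t+L*t+M)); [|nra].
  rewrite E.
  assert (0 < (q-t)*(-p*p+L*p+M)) by nra.
  assert (0 <= (t-p)*(-q*q+L*q+M)) by nra.
  assert (0 <= (q-p)*(t-p)*(q-t)). { apply Rmult_le_pos; [nra|lra]. }
  lra.
Qed.

Lemma QCw (L M p q t : R) : p <= t <= q -> p < q ->
  - p*p + L*p + M >= 0 -> - q*q + L*q + M >= 0 -> - t*t + L*t + M >= 0.
Proof.
  intros [H1 H2] Hpq Hp Hq.
  assert (E : (q-p)*(-t*t+L*t+M) = (q-t)*(-p*p+L*p+M) + (t-p)*(-q*q+L*q+M) + (q-p)*(t-p)*(q-t)) by ring.
  assert (0 < q - p) by lra.
  assert (0 <= (q-p)*(-t*t+L*t+M)); [|nra].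
  rewrite E.
  assert (0 <= (q-t)*(-p*p+L*p+M)) by nra.
  assert (0 <= (t-p)*(-q*q+L*q+M)) by nra.
  assert (0 <= (q-p)*(t-p)*(q-t)). { apply Rmult_le_pos; [nra|lra]. }
  lra.
Qed.

Lemma cos_gt_half (x : R) : 0 <= x <= PI -> cos x < 1/2 -> PI/3 < x.
Proof.
  intros Hx Hc. rewrite <- cos_PI3 in Hc.
  pose proof PI_RGT_0; apply (cos_decreasing_0 x (PI/3)); lra.
Qed.

Lemma cos_le_mhalf (x : R) : PI <= x <= 4*PI/3 -> cos x <= - (1/2).
Proof.
  intros Hx. pose proof PI_RGT_0.
  assert (E : cos (x - PI) = - cos x) by (rewrite cos_minus, cos_PI, sin_PI; ring).
  assert (cos (PI/3) <= cos (x - PI)).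
  { destruct (Req_dec (x - PI) (PI/3)) as [e|ne]. rewrite e; lra.
    left; apply cos_decreasing_1; lra. }
  rewrite cos_PI3 in H0. lra.
Qed.

Lemma FL (c r1 r2 t1 t2 : R) : 0 < c -> 0 < r1 < c -> 0 < r2 < c ->
  0 <= t1 <= PI -> 0 <= t2 <= PI -> t1 + t2 <= 5*PI/6 ->
  r1*r1 - 2*c*r1*cos t1 < 0 \/ r2*r2 - 2*c*r2*cos t2 < 0 \/
  2*c*(r1*cos t1 + r2*cos t2) - r1*r1 - r2*r2 - 2*r1*r2*cos (t1+t2) > 0.
Proof.
  intros Hc H1 H2 T1 T2 T12. pose proof PI_RGT_0 as HPI.
  destruct (Rlt_dec (r1*r1 - 2*c*r1*cos t1) 0) as [h|h1]; [left; exact h|].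
  destruct (Rlt_dec (r2*r2 - 2*c*r2*cos t2) 0) as [h|h2]; [right; left; exact h|].
  right; right.
  set (a := cos t1) in *. set (b := cos t2) in *.
  assert (Ha : 2*c*a <= r1) by nra.
  assert (Hb : 2*c*b <= r2) by nra.
  assert (Ha2 : a < 1/2). { apply (Rmult_lt_reg_l (2*c)); nra. }
  assert (Hb2 : b < 1/2). { apply (Rmult_lt_reg_l (2*c)); nra. }
  assert (P1 := cos_gt_half t1 T1 Ha2).
  assert (P2 := cos_gt_half t2 T2 Hb2).
  assert (a0 : 0 < a) by (apply cos_gt_0; lra).
  assert (b0 : 0 < b) by (apply cos_gt_0; lra).
  set (sa := sin t1). set (sb := sin t2).
  assert (sa0 : 0 < sa) by (apply sin_gt_0; lra).
  assert (sb0 : 0 < sb) by (apply sin_gt_0; lra).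
  assert (ea : a*a + sa*sa = 1) by (pose proof (sin2_cos2 t1); unfold Rsqr in *; unfold a, sa; lra).
  assert (eb : b*b + sb*sb = 1) by (pose proof (sin2_cos2 t2); unfold Rsqr in *; unfold b, sb; lra).
  assert (EK : cos (t1 + t2) = a*b - sa*sb) by (rewrite cos_plus; reflexivity).
  rewrite EK. set (K := a*b - sa*sb).
  assert (C1 : cos (t1 + 2*t2) <= -(1/2)) by (apply cos_le_mhalf; lra).
  assert (C2 : cos (t2 + 2*t1) <= -(1/2)) by (apply cos_le_mhalf; lra).
  rewrite cos_plus, cos_2a, sin_2a in C1, C2. fold a b sa sb in C1, C2.
  assert (G1 : 2*a - 1 - 4*b*K >= 0) by (unfold K; nra).
  assert (G2 : 2*b - 1 - 4*a*K >= 0) by (unfold K; nra).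
  assert (Hsa : sa >= 1 - a) by nra.
  assert (Hsb : sb >= 1 - b) by nra.
  assert (H : a + b - 1 - K >= 0) by (unfold K; nra).
  assert (FA : - r2*r2 + (2*c*b - 2*c*K)*r2 + c*c*(2*a-1) >= 0).
  { apply (QCw _ _ (2*c*b) c); try lra; nra. }
  assert (FB : - (2*c*a)*(2*c*a) + (2*c*a - 2*r2*K)*(2*c*a) + (2*c*r2*b - r2*r2) > 0).
  { assert (E : - (2*c*a)*(2*c*a) + (2*c*a - 2*r2*K)*(2*c*a) + (2*c*r2*b - r2*r2)
              = r2 * (c * (2*b - 1 - 4*a*K) + (c - r2))) by ring.
    rewrite E. apply Rmult_lt_0_compat; nra. }
  assert (FC := QCs (2*c*a - 2*r2*K) (2*c*r2*b - r2*r2) (2*c*a) c r1 (conj Ha (proj2 H1)) FB ltac:(nra)).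
  nra.
Qed.

Lemma ratio_bound (X Y N : R) : 0 < N -> X*X + Y*Y = N*N -> -1 <= X/N <= 1.
Proof.
  intros HN E.
  assert (Habs : -N <= X <= N) by (split; nra).
  split.
  - apply (Rmult_le_reg_r N); [lra|]. unfold Rdiv. rewrite Rmult_assoc, Rinv_l by lra. lra.
  - apply (Rmult_le_reg_r N); [lra|]. unfold Rdiv. rewrite Rmult_assoc, Rinv_l by lra. lra.
Qed.

Lemma acos_ratio (X Y N : R) : 0 < N -> X*X + Y*Y = N*N ->
  cos (acos (X/N)) * N = X /\ sin (acos (X/N)) * N = Rabs Y.
Proof.
  intros HN E. pose proof (ratio_bound X Y N HN E) as B.
  rewrite cos_acos by exact B. rewrite sin_acos by exact B.
  split. field. lra.
  assert (E2 : 1 - (X/N)² = (Rabs Y / N)²).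
  { unfold Rsqr.
    replace (Rabs Y / N * (Rabs Y / N)) with (Rabs Y * Rabs Y / (N*N)) by (field; lra).
    rewrite <- Rabs_mult, (Rabs_pos_eq (Y*Y)) by nra. field_simplify_eq; [|lra]. nra. }
  rewrite E2, sqrt_Rsqr. field. lra.
  apply Rmult_le_pos. apply Rabs_pos. left; apply Rinv_0_lt_compat; lra.
Qed.

Lemma sqrt_sq_sum (x y : R) : sqrt (x*x+y*y) * sqrt (x*x+y*y) = x*x+y*y.
Proof. apply sqrt_sqrt. nra. Qed.

Lemma FLV (ex ey a1 b1 a2 b2 : R) :
  let c := sqrt (ex*ex+ey*ey) in
  let r1 := sqrt (a1*a1+b1*b1) in
  let r2 := sqrt (a2*a2+b2*b2) in
  let X1 := ex*a1 + ey*b1 in let Y1 := ex*b1 - ey*a1 in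
  let X2 := -(ex*a2 + ey*b2) in let Y2 := ex*b2 - ey*a2 in
  0 < r1 < c -> 0 < r2 < c ->
  acos (X1/(r1*c)) + acos (X2/(r2*c)) <= 5*PI/6 ->
  0 <= Y1*Y2 ->
  (a1 - ex)*(a1-ex) + (b1 - ey)*(b1-ey) < ex*ex+ey*ey \/
  (a2 + ex)*(a2+ex) + (b2 + ey)*(b2+ey) < ex*ex+ey*ey \/
  (a1 - ex - a2)*(a1 - ex - a2) + (b1 - ey - b2)*(b1 - ey - b2) < ex*ex+ey*ey.
Proof.
  intros c r1 r2 X1 Y1 X2 Y2 H1 H2 Ht HY.
  assert (Ec : c*c = ex*ex+ey*ey) by apply sqrt_sq_sum.
  assert (E1 : r1*r1 = a1*a1+b1*b1) by apply sqrt_sq_sum.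
  assert (E2 : r2*r2 = a2*a2+b2*b2) by apply sqrt_sq_sum.
  assert (N1 : 0 < r1*c) by nra. assert (N2 : 0 < r2*c) by nra.
  assert (I1 : X1*X1 + Y1*Y1 = (r1*c)*(r1*c)).
  { replace ((r1*c)*(r1*c)) with ((r1*r1)*(c*c)) by ring. rewrite E1, Ec. unfold X1, Y1; ring. }
  assert (I2 : X2*X2 + Y2*Y2 = (r2*c)*(r2*c)).
  { replace ((r2*c)*(r2*c)) with ((r2*r2)*(c*c)) by ring. rewrite E2, Ec. unfold X2, Y2; ring. }
  destruct (acos_ratio X1 Y1 (r1*c) N1 I1) as [C1 S1].
  destruct (acos_ratio X2 Y2 (r2*c) N2 I2) as [C2 S2].
  set (t1 := acos (X1/(r1*c))) in *. set (t2 := acos (X2/(r2*c))) in *.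
  assert (B1 : 0 <= t1 <= PI) by apply acos_bound.
  assert (B2 : 0 <= t2 <= PI) by apply acos_bound.
  assert (HC : 0 < c) by lra.
  destruct (FL c r1 r2 t1 t2 HC H1 H2 B1 B2 Ht) as [h|[h|h]].
  - left. assert (h' : r1*r1*c - 2*c*(cos t1*(r1*c)) < 0).
    { replace (r1*r1*c - 2*c*(cos t1*(r1*c))) with ((r1*r1 - 2*c*r1*cos t1)*c) by ring. nra. }
    rewrite C1 in h'. unfold X1 in h'. nra.
  - right; left. assert (h' : r2*r2*c - 2*c*(cos t2*(r2*c)) < 0).
    { replace (r2*r2*c - 2*c*(cos t2*(r2*c))) with ((r2*r2 - 2*c*r2*cos t2)*c) by ring. nra. }
    rewrite C2 in h'. unfold X2 in h'. nra.
  - right; right.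
    assert (SS : sin t1 * sin t2 * (r1*c) * (r2*c) = Y1*Y2).
    { replace (sin t1 * sin t2 * (r1*c) * (r2*c)) with ((sin t1 * (r1*c)) * (sin t2*(r2*c))) by ring.
      rewrite S1, S2, <- Rabs_mult. apply Rabs_pos_eq; lra. }
    rewrite cos_plus in h.
    assert (h' : (2*c*(r1*cos t1 + r2*cos t2) - r1*r1 - r2*r2 - 2*r1*r2*(cos t1*cos t2 - sin t1*sin t2))*(c*c) > 0) by (apply Rmult_gt_0_compat; nra).
    assert (E : (2*c*(r1*cos t1 + r2*cos t2) - r1*r1 - r2*r2 - 2*r1*r2*(cos t1*cos t2 - sin t1*sin t2))*(c*c)
       = 2*c*c*(cos t1*(r1*c) + cos t2*(r2*c)) - r1*r1*(c*c) - r2*r2*(c*c) - 2*((cos t1*(r1*c))*(cos t2*(r2*c)) - sin t1 * sin t2 * (r1*c) * (r2*c))) by ring.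
    rewrite E, C1, C2, SS, E1, E2, Ec in h'. unfold X1, X2, Y1, Y2 in h'.
    assert (h2 : ((a1 - ex - a2)*(a1 - ex - a2) + (b1 - ey - b2)*(b1 - ey - b2) - (ex*ex+ey*ey)) * (ex*ex+ey*ey) < 0).
    { replace (2*c*c) with (2*(c*c)) in h' by ring. rewrite Ec in h'. lra. }
    assert (0 < ex*ex+ey*ey) by nra. nra.
Qed.

Definition key (p : point) (fx fy : R) (w : point) : R :=
  (fx*(fst w - fst p) + fy*(snd w - snd p)) /
  (sqrt ((fst w - fst p)*(fst w - fst p) + (snd w - snd p)*(snd w - snd p)) * sqrt (fx*fx+fy*fy)).

Definition crs (p : point) (fx fy : R) (w : point) : R :=
  fx*(snd w - snd p) - fy*(fst w - fst p).

Lemma polar (fx fy : R) : 0 < fx*fx+fy*fy ->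
  exists b, fx = sqrt (fx*fx+fy*fy) * cos b /\ fy = sqrt (fx*fx+fy*fy) * sin b.
Proof.
  intros H. set (c := sqrt (fx*fx+fy*fy)).
  assert (Ec : c*c = fx*fx+fy*fy) by apply sqrt_sq_sum.
  assert (Hc : 0 < c) by (apply sqrt_lt_R0; lra).
  destruct (acos_ratio fx fy c Hc ltac:(lra)) as [C S].
  destruct (Rle_dec 0 fy) as [h|h].
  - exists (acos (fx/c)). rewrite Rabs_pos_eq in S by lra. lra.
  - exists (- acos (fx/c)). rewrite cos_neg, sin_neg. rewrite Rabs_left in S by lra. lra.
Qed.

Lemma cone_info (p : point) (fx fy b th alpha : R) (w : point) :
  0 < fx*fx+fy*fy ->
  fx = sqrt (fx*fx+fy*fy) * cos b -> fy = sqrt (fx*fx+fy*fy) * sin b ->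
  in_cone p th alpha w -> w <> p ->
  exists phi t, 0 < t /\ th - alpha/2 <= phi <= th + alpha/2 /\
    key p fx fy w = cos (phi - b) /\ crs p fx fy w = sqrt (fx*fx+fy*fy) * t * sin (phi - b).
Proof.
  intros H Hx Hy [t [phi [Ht [Hphi Ew]]]] Hne.
  set (c := sqrt (fx*fx+fy*fy)) in *.
  assert (Hc : 0 < c) by (apply sqrt_lt_R0; lra).
  assert (t0 : t <> 0). { intro e. apply Hne. rewrite Ew, e. destruct p; simpl; f_equal; ring. }
  exists phi, t. split; [lra|]. split; [exact Hphi|].
  unfold key, crs. rewrite Ew; simpl.
  replace (fst p + t * cos phi - fst p) with (t*cos phi) by ring.
  replace (snd p + t * sin phi - snd p) with (t*sin phi) by ring.
  assert (En : sqrt (t * cos phi * (t * cos phi) + t * sin phi * (t * sin phi)) = t).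
  { replace (t * cos phi * (t * cos phi) + t * sin phi * (t * sin phi)) with (t*t*((sin phi)² + (cos phi)²)) by (unfold Rsqr; ring).
    rewrite sin2_cos2, Rmult_1_r. apply sqrt_square. lra. }
  fold c. rewrite En. split.
  - rewrite cos_minus. rewrite Hx at 1. rewrite Hy at 1. field. lra.
  - rewrite sin_minus. rewrite Hx at 1. rewrite Hy at 1. ring.
Qed.

Lemma nogap_cone (S : point -> Prop) (p : point) (alpha : R) :
  ~ has_gap S p alpha -> forall th, exists w, S w /\ in_cone p th alpha w.
Proof.
  intros H th. apply NNPP. intro H2. apply H. exists th. intros w Sw Cw. apply H2. exists w; auto.
Qed.

Lemma fin_max (l : list point) (P : point -> Prop) (g : point -> R) :
  (exists w, P w /\ In w l) ->
  exists w, P w /\ In w l /\ forall z, P z -> In z l -> g z <= g w.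
Proof.
  induction l as [|a l IH]; intros [w [Pw Iw]].
  - destruct Iw.
  - destruct (classic (exists w, P w /\ In w l)) as [Ht|Ht].
    + destruct (IH Ht) as [m [Pm [Im Hm]]].
      destruct (classic (P a)) as [Pa|Pa].
      * destruct (Rle_dec (g a) (g m)) as [h|h].
        -- exists m. split; [auto|]. split; [right; auto|]. intros z Pz [e|Iz]. subst; auto. auto.
        -- exists a. split; [auto|]. split; [left; auto|]. intros z Pz [e|Iz]. subst; lra.
           specialize (Hm z Pz Iz). lra.
      * exists m. split; [auto|]. split; [right; auto|]. intros z Pz [e|Iz]. subst; contradiction. auto.
    + destruct Iw as [e|Iw]; [|exfalso; apply Ht; eauto].
      subst. exists w. split; [auto|]. split; [left; auto|]. intros z Pz [e|Iz]. subst; lra.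
      exfalso; apply Ht; eauto.
Qed.

Lemma key_bound (p : point) (fx fy : R) (w : point) : 0 < fx*fx+fy*fy -> w <> p ->
  -1 <= key p fx fy w <= 1.
Proof.
  intros H Hne. unfold key.
  set (a := fst w - fst p). set (b := snd w - snd p).
  assert (Hab : 0 < a*a+b*b).
  { destruct (Req_dec a 0) as [ea|ea]; [destruct (Req_dec b 0) as [eb|eb]|]; try nra.
    exfalso; apply Hne. destruct w, p; unfold a, b in *; simpl in *. f_equal; lra. }
  apply (ratio_bound _ (fx*b - fy*a)).
  - apply Rmult_lt_0_compat; apply sqrt_lt_R0; lra.
  - replace (sqrt (a * a + b * b) * sqrt (fx * fx + fy * fy) * (sqrt (a * a + b * b) * sqrt (fx * fx + fy * fy)))
      with ((sqrt (a * a + b * b) * sqrt (a * a + b * b)) * (sqrt (fx * fx + fy * fy) * sqrt (fx * fx + fy * fy))) by ring.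
    rewrite !sqrt_sq_sum. ring.
Qed.

Lemma AL (V : list point) (S : point -> Prop) (p : point) (fx fy alpha : R) :
  0 < fx*fx+fy*fy -> 0 < alpha -> alpha <= 5*PI/6 ->
  (forall w, S w -> In w V) -> (forall w, S w -> w <> p) ->
  ~ has_gap S p alpha ->
  exists w1 w2, S w1 /\ S w2 /\ 0 <= crs p fx fy w1 /\ crs p fx fy w2 <= 0 /\
    acos (key p fx fy w1) + acos (key p fx fy w2) <= alpha.
Proof.
  intros Hf Ha1 Ha2 HV Hne Hng. pose proof PI_RGT_0 as HPI.
  pose proof (nogap_cone S p alpha Hng) as NG.
  destruct (polar fx fy Hf) as [b [Hx Hy]].
  set (c := sqrt (fx*fx+fy*fy)) in *.
  assert (Hc : 0 < c) by (apply sqrt_lt_R0; lra).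
  destruct (NG (b + PI/2)) as [wu [Su Cu]].
  destruct (cone_info p fx fy b _ _ wu Hf Hx Hy Cu (Hne wu Su)) as [phu [tu [tu0 [Rphu [_ Cru]]]]].
  assert (Uu : 0 <= crs p fx fy wu).
  { fold c in Cru. rewrite Cru. apply Rmult_le_pos; [apply Rmult_le_pos; lra|]. apply sin_ge_0; lra. }
  destruct (NG (b - PI/2)) as [wl [Sl Cl]].
  destruct (cone_info p fx fy b _ _ wl Hf Hx Hy Cl (Hne wl Sl)) as [phl [tl [tl0 [Rphl [_ Crl]]]]].
  assert (Ll : crs p fx fy wl <= 0).
  { fold c in Crl. rewrite Crl. replace (phl - b) with (- (b - phl)) by ring. rewrite sin_neg.
    assert (0 <= c*tl*sin (b - phl)) by (repeat apply Rmult_le_pos; try lra; apply sin_ge_0; lra).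
    replace (c*tl*-sin(b-phl)) with (-(c*tl*sin(b-phl))) by ring. lra. }
  destruct (fin_max V (fun w => S w /\ 0 <= crs p fx fy w) (key p fx fy)) as [w1 [[S1 U1] [_ M1]]].
  { exists wu; auto. }
  destruct (fin_max V (fun w => S w /\ crs p fx fy w <= 0) (key p fx fy)) as [w2 [[S2 L2] [_ M2]]].
  { exists wl; auto. }
  exists w1, w2. split; [auto|]. split; [auto|]. split; [auto|]. split; [auto|].
  set (t1 := acos (key p fx fy w1)). set (t2 := acos (key p fx fy w2)).
  assert (B1 : 0 <= t1 <= PI) by apply acos_bound.
  assert (B2 : 0 <= t2 <= PI) by apply acos_bound.
  assert (K1 : cos t1 = key p fx fy w1) by (apply cos_acos, key_bound; auto).
  assert (K2 : cos t2 = key p fx fy w2) by (apply cos_acos, key_bound; auto).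
  apply Rnot_lt_le. intro Hlt.
  destruct (NG (b + (t1 - t2)/2)) as [w [Sw Cw]].
  destruct (cone_info p fx fy b _ _ w Hf Hx Hy Cw (Hne w Sw)) as [ph [t [t0 [Rph [Kw Crw]]]]].
  fold c in Crw.
  destruct (Rle_dec 0 (ph - b)) as [hp|hn].
  - assert (Uw : 0 <= crs p fx fy w).
    { rewrite Crw. apply Rmult_le_pos; [apply Rmult_le_pos; lra|]. apply sin_ge_0; lra. }
    specialize (M1 w (conj Sw Uw) (HV w Sw)).
    assert (cos t1 < cos (ph - b)) by (apply cos_decreasing_1; lra).
    lra.
  - assert (Lw : crs p fx fy w <= 0).
    { rewrite Crw. replace (ph - b) with (- (b - ph)) by ring. rewrite sin_neg.
      assert (0 <= c*t*sin (b - ph)) by (repeat apply Rmult_le_pos; try lra; apply sin_ge_0; lra).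
      replace (c*t*-sin(b-ph)) with (-(c*t*sin(b-ph))) by ring. lra. }
    specialize (M2 w (conj Sw Lw) (HV w Sw)).
    assert (cos t2 < cos (b - ph)) by (apply cos_decreasing_1; lra).
    replace (ph - b) with (- (b - ph)) in Kw by ring. rewrite cos_neg in Kw.
    lra.
Qed.

Lemma d_eq (p q : point) : d p q = sqrt ((fst q - fst p)*(fst q - fst p) + (snd q - snd p)*(snd q - snd p)).
Proof. unfold d. f_equal. ring. Qed.

Lemma d_lt (p q p' q' : point) :
  (fst q - fst p)*(fst q - fst p) + (snd q - snd p)*(snd q - snd p) <
  (fst q' - fst p')*(fst q' - fst p') + (snd q' - snd p')*(snd q' - snd p') -> d p q < d p' q'.
Proof. intros H. rewrite !d_eq. apply sqrt_lt_1_alt. split; [apply Rplus_le_le_0_compat; apply Rle_0_sqr|exact H]. Qed.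

Lemma finish (V : list point) (rs : list R) (alpha : R) (u v : point) (iu iv : nat) (w z : point) :
  cbtc_index V rs alpha u iu -> cbtc_index V rs alpha v iv ->
  S_lvl V rs iu u w -> S_lvl V rs iv v z ->
  nth iu rs 0 < d u v -> nth iv rs 0 < d u v -> In u V -> In v V ->
  acos (key u (fst v - fst u) (snd v - snd u) w) + acos (key v (fst u - fst v) (snd u - snd v) z) <= 5*PI/6 ->
  0 <= crs u (fst v - fst u) (snd v - snd u) w * crs v (fst v - fst u) (snd v - snd u) z ->
  exists u' v' : point,
    In u' V /\ In v' V /\
    d u' v' < d u v /\
    (u' = u \/ E_alpha V rs alpha u u') /\
    (v' = v \/ E_alpha V rs alpha v v').
Proof.
  intros Iu Iv Sw Sz Hu Hv InU InV Hang Hcr.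
  destruct Sw as [InW [Wne Wd]]. destruct Sz as [InZ [Zne Zd]].
  assert (Ew : E_alpha V rs alpha u w) by (left; exists iu; split; [exact Iu| repeat split; auto]).
  assert (Ez : E_alpha V rs alpha v z) by (left; exists iv; split; [exact Iv| repeat split; auto]).
  set (ex := fst v - fst u) in *. set (ey := snd v - snd u) in *.
  set (a1 := fst w - fst u). set (b1 := snd w - snd u).
  set (a2 := fst z - fst v). set (b2 := snd z - snd v).
  assert (Hc : d u v = sqrt (ex*ex+ey*ey)) by (rewrite d_eq; reflexivity).
  assert (Hr1 : d u w = sqrt (a1*a1+b1*b1)) by (rewrite d_eq; reflexivity).
  assert (Hr2 : d v z = sqrt (a2*a2+b2*b2)) by (rewrite d_eq; reflexivity).
  assert (p1 : 0 < a1*a1+b1*b1).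
  { destruct (Req_dec a1 0) as [ea|ea]; [destruct (Req_dec b1 0) as [eb|eb]|]; try nra.
    exfalso; apply Wne. destruct w, u; unfold a1, b1 in *; simpl in *. f_equal; lra. }
  assert (p2 : 0 < a2*a2+b2*b2).
  { destruct (Req_dec a2 0) as [ea|ea]; [destruct (Req_dec b2 0) as [eb|eb]|]; try nra.
    exfalso; apply Zne. destruct z, v; unfold a2, b2 in *; simpl in *. f_equal; lra. }
  assert (R1 : 0 < sqrt (a1*a1+b1*b1) < sqrt (ex*ex+ey*ey)).
  { split. apply sqrt_lt_R0; lra. rewrite <- Hr1, <- Hc. lra. }
  assert (R2 : 0 < sqrt (a2*a2+b2*b2) < sqrt (ex*ex+ey*ey)).
  { split. apply sqrt_lt_R0; lra. rewrite <- Hr2, <- Hc. lra. }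
  assert (K1 : key u ex ey w = (ex*a1 + ey*b1)/(sqrt (a1*a1+b1*b1) * sqrt (ex*ex+ey*ey))) by reflexivity.
  assert (K2 : key v (fst u - fst v) (snd u - snd v) z = (-(ex*a2 + ey*b2))/(sqrt (a2*a2+b2*b2) * sqrt (ex*ex+ey*ey))).
  { unfold key. fold a2 b2. f_equal. unfold ex, ey; ring. f_equal. f_equal. unfold ex, ey; ring. }
  rewrite K1, K2 in Hang.
  assert (Y : 0 <= (ex*b1 - ey*a1) * (ex*b2 - ey*a2)) by exact Hcr.
  destruct (FLV ex ey a1 b1 a2 b2 R1 R2 Hang Y) as [h|[h|h]].
  - exists w, v. repeat split; auto. apply d_lt.
    replace (fst v - fst w) with (-(a1 - ex)) by (unfold a1, ex; ring).
    replace (snd v - snd w) with (-(b1 - ey)) by (unfold b1, ey; ring). fold ex ey. nra.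
  - exists u, z. repeat split; auto. apply d_lt.
    replace (fst z - fst u) with (a2 + ex) by (unfold a2, ex; ring).
    replace (snd z - snd u) with (b2 + ey) by (unfold b2, ey; ring). fold ex ey. nra.
  - exists w, z. repeat split; auto. apply d_lt.
    replace (fst z - fst w) with (-(a1 - ex - a2)) by (unfold a1, a2, ex; ring).
    replace (snd z - snd w) with (-(b1 - ey - b2)) by (unfold b1, b2, ey; ring). fold ex ey. nra.
Qed.

Lemma least_nat (P : nat -> Prop) (n : nat) : P n -> exists m, P m /\ forall k, (k < m)%nat -> ~ P k.
Proof.
  revert n. induction n as [n IH] using (well_founded_induction Wf_nat.lt_wf). intros Pn.
  destruct (classic (exists k, (k < n)%nat /\ P k)) as [[k [hk Pk]]|H].
  - exact (IH k hk Pk).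
  - exists n. split; [exact Pn|]. intros k hk Pk. apply H. eauto.
Qed.

Lemma index_exists (V : list point) (rs : list R) (Rmax alpha : R) (u : point) :
  levels_ok rs Rmax -> exists i, cbtc_index V rs alpha u i.
Proof.
  intros [Hl _].
  destruct (classic (exists j, (j < length rs)%nat /\ ~ has_gap (S_lvl V rs j u) u alpha)) as [[j Hj]|H].
  - destruct (least_nat (fun j => (j < length rs)%nat /\ ~ has_gap (S_lvl V rs j u) u alpha) j Hj) as [m [[hm Hm] Hmin]].
    exists m. split; [exact hm|]. left. split; [exact Hm|].
    intros k hk. apply NNPP. intro Hg. apply (Hmin k hk). split; [lia|exact Hg].
  - exists (pred (length rs)). split; [lia|]. right. split; [reflexivity|].
    intros j hj. apply NNPP. intro Hg. apply H. eauto.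
Qed.

Lemma index_nogap (V : list point) (rs : list R) (Rmax alpha : R) (u v : point) (i : nat) :
  levels_ok rs Rmax -> In v V -> v <> u -> d u v <= Rmax ->
  cbtc_index V rs alpha u i -> ~ S_lvl V rs i u v ->
  ~ has_gap (S_lvl V rs i u) u alpha /\ nth i rs 0 < d u v.
Proof.
  intros [_ [_ [_ Hlast]]] InV Hne Hd [hi [[Hng _]|[ei _]]] HnS.
  - split; [exact Hng|]. apply Rnot_le_lt. intro h. apply HnS. repeat split; auto.
  - exfalso. apply HnS. repeat split; auto. subst i. rewrite Hlast. exact Hd.
Qed.

Theorem lemma1 (V : list point) (rs : list R) (Rmax alpha : R) (u v : point) :
  NoDup V ->
  0 < Rmax ->
  levels_ok rs Rmax ->
  0 < alpha -> alpha <= 5 * PI / 6 ->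
  E_R V Rmax u v ->
  E_alpha V rs alpha u v \/
  exists u' v' : point,
    In u' V /\ In v' V /\
    d u' v' < d u v /\
    (u' = u \/ E_alpha V rs alpha u u') /\
    (v' = v \/ E_alpha V rs alpha v v').
Proof.
  intros _ HR Hlev Ha1 Ha2 [InU [InV [Hne Hd]]].
  destruct (classic (E_alpha V rs alpha u v)) as [h|hE]; [left; exact h|right].
  destruct (index_exists V rs Rmax alpha u Hlev) as [iu Iu].
  destruct (index_exists V rs Rmax alpha v Hlev) as [iv Iv].
  assert (nSu : ~ S_lvl V rs iu u v). { intro s. apply hE. left. exists iu. auto. }
  assert (nSv : ~ S_lvl V rs iv v u). { intro s. apply hE. right. exists iv. auto. }
  assert (dsym : d v u = d u v) by (unfold d; f_equal; ring).
  destruct (index_nogap V rs Rmax alpha u v iu Hlev InV (fun e => Hne (eq_sym e)) Hd Iu nSu) as [NGu Lu].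
  destruct (index_nogap V rs Rmax alpha v u iv Hlev InU Hne ltac:(rewrite dsym; exact Hd) Iv nSv) as [NGv Lv].
  rewrite dsym in Lv.
  set (ex := fst v - fst u). set (ey := snd v - snd u).
  assert (Hf : 0 < ex*ex+ey*ey).
  { destruct (Req_dec ex 0) as [ea|ea]; [destruct (Req_dec ey 0) as [eb|eb]|]; try nra.
    exfalso; apply Hne. destruct u, v; unfold ex, ey in *; simpl in *. f_equal; lra. }
  assert (Hf' : 0 < (fst u - fst v)*(fst u - fst v)+(snd u - snd v)*(snd u - snd v)).
  { replace ((fst u - fst v)*(fst u - fst v)+(snd u - snd v)*(snd u - snd v)) with (ex*ex+ey*ey) by (unfold ex, ey; ring). exact Hf. }
  destruct (AL V (S_lvl V rs iu u) u ex ey alpha Hf Ha1 Ha2) as [w1 [w2 [S1 [S2 [C1 [C2 A12]]]]]].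
  { intros w [h _]; exact h. } { intros w [_ [h _]]; exact h. } { exact NGu. }
  destruct (AL V (S_lvl V rs iv v) v _ _ alpha Hf' Ha1 Ha2) as [z1 [z2 [T1 [T2 [D1 [D2 B12]]]]]].
  { intros w [h _]; exact h. } { intros w [_ [h _]]; exact h. } { exact NGv. }
  assert (crsN : forall z, crs v (fst u - fst v) (snd u - snd v) z = - crs v ex ey z).
  { intro z. unfold crs, ex, ey. ring. }
  rewrite crsN in D1, D2.
  destruct (Rle_dec (acos (key u ex ey w1) + acos (key v (fst u - fst v) (snd u - snd v) z2)) alpha) as [h|h].
  - apply (finish V rs alpha u v iu iv w1 z2); auto; fold ex ey. lra.
    apply Rmult_le_pos; lra.
  - apply (finish V rs alpha u v iu iv w2 z1); auto; fold ex ey. lra.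
    replace (crs u ex ey w2 * crs v ex ey z1) with ((- crs u ex ey w2) * (- crs v ex ey z1)) by ring.
    apply Rmult_le_pos; lra.
Qed.
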